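(* Let $n\ge1$. If $2\le m\le\infty$, then $c_{\pi s,s+}(n,\ell_1^m)=\gamma(n)$. Consequently, $$\sup_E\frac{c_{\pi s,s+}(n,E)}{c_+(E)^n}=\sup_{E:\,c_+(E)=1}c_{\pi s,s+}(n,E)=c_{\pi s,s+}(n,\ell_1)=c_{\pi s,s+}(n,\ell_1^2)=\gamma(n),$$ where the suprema are over all ordered normed spaces $E$.
   Context: All vector spaces are real. An ordered normed space is a real normed space $E$ together with a closed convex cone $E_+\subseteq E$ (positive elements) such that $E=E_+-E_+$ and such that, writing $\|x\|_+:=\inf\{\|y\|+\|z\|: x=y-z,\ y,z\in E_+\}$, the constant $c_+(E):=\sup\{\|x\|_+:\|x\|\le1\}$ is finite; $E^+$ denotes $E$ with the norm $\|\cdot\|_+$. $E^{\vee n}$ is the space of symmetric tensors in the algebraic tensor power $E^{\otimes n}$, and $x^{\otimes n}:=x\otimes\cdots\otimes x$. For a normed space $F$, $\|\mathbf{x}\|_{\pi s,F}:=\inf\{\sum_k|a_k|\,\|x_k\|^n : \mathbf{x}=\sum_k a_k x_k^{\otimes n},\ x_k\in F\}$, and for an ordered normed space $E$, $\|\mathbf{x}\|_{\pi s+,E}:=\inf\{\sum_k|a_k|\,\|x_k\|^n : \mathbf{x}=\sum_k a_k x_k^{\otimes n},\ x_k\in E_+\}$ (finite sums, $a_k\in\mathbb{R}$). $c_{\pi s,s+}(n,E):=\sup\{\|\mathbf{x}\|_{\pi s+,E}/\|\mathbf{x}\|_{\pi s,E}:0\ne\mathbf{x}\in E^{\vee n}\}$.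 $\gamma(n)$ is the smallest constant $C$ such that $\|\mathbf{x}\|_{\pi s+,E}\le C\,\|\mathbf{x}\|_{\pi s,E^+}$ for every ordered normed space $E$ and every $\mathbf{x}\in E^{\vee n}$ (such finite constants exist). $\ell_1^m$ ($1\le m<\infty$) is $\mathbb{R}^m$ with the $\ell_1$-norm, $\ell_1^\infty=\ell_1$, ordered coordinatewise. *)

(* Defs.v *)
From HB Require Import structures.
From mathcomp Require Import all_boot all_order all_algebra all_fingroup.
From mathcomp Require Import boolp classical_sets functions reals ereal.
Set Implicit Arguments. Unset Strict Implicit. Unset Printing Implicit Defensive.
Import Order.TTheory GRing.Theory Num.Theory.
Local Open Scope ring_scope.
Local Open Scope classical_set_scope.

Section OrderedNormedSpaces.
Variable R : realType.

Record ons := ONS {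
  ons_car :> lmodType R;
  ons_norm : ons_car -> R;
  ons_cone : set ons_car }.
Arguments ons_norm : clear implicits.
Arguments ons_cone : clear implicits.

Definition is_norm (V : lmodType R) (N : V -> R) : Prop :=
  [/\ forall x, 0 <= N x,
      forall x, N x = 0 -> x = 0,
      forall (a : R) x, N (a *: x) = `|a| * N x
    & forall x y, N (x + y) <= N x + N y].

Definition is_closed_convex_cone (V : lmodType R) (N : V -> R) (P : set V) :=
  [/\ P 0,
      forall x y, P x -> P y -> P (x + y),
      forall (a : R) x, 0 <= a -> P x -> P (a *: x)
    & forall x, (forall e : R, 0 < e -> exists2 p, P p & N (x - p) < e) -> P x].

Definition pnorm (E : ons) (x : E) : R :=
  inf [set r | exists y z : E, [/\ ons_cone E y, ons_cone E z, x = y - z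
                             & r = ons_norm E y + ons_norm E z]].

Definition cplus (E : ons) : R :=
  sup [set pnorm x | x in [set x : E | ons_norm E x <= 1]].

Definition is_ons (E : ons) : Prop :=
  [/\ is_norm (ons_norm E),
      is_closed_convex_cone (ons_norm E) (ons_cone E),
      (forall x : E, exists y z : E, [/\ ons_cone E y, ons_cone E z & x = y - z])
    & exists C : R, forall x : E, ons_norm E x <= 1 -> pnorm x <= C].

(* An element of the algebraic tensor power E^{(x)n} is represented by a
   finite formal sum  sum_k a_k x_{k,1} (x) ... (x) x_{k,n};  two such sums
   denote the same tensor iff they induce the same n-linear form on
   (E^#)^n, E^# the algebraic dual (canonical injection E^{(x)n} ->
   multilinear forms on (E^#)^n). *)
Section Tensors.
Variable V : lmodType R.

Definition lin (f : V -> R) : Prop :=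
  forall (a : R) x y, f (a *: x + y) = a * f x + f y.

Definition tensor (n : nat) := seq (R * ('I_n -> V)).

Definition tform n (t : tensor n) (phi : 'I_n -> V -> R) : R :=
  \sum_(p <- t) p.1 * \prod_(i < n) phi i (p.2 i).

Definition teq n (t1 t2 : tensor n) : Prop :=
  forall phi : 'I_n -> V -> R, (forall i, lin (phi i)) ->
    tform t1 phi = tform t2 phi.

Definition tsym n (t : tensor n) : Prop :=
  forall (s : 'S_n) (phi : 'I_n -> V -> R), (forall i, lin (phi i)) ->
    tform t (fun i => phi (s i)) = tform t phi.

Definition powt n (s : seq (R * V)) : tensor n :=
  [seq (p.1, fun _ : 'I_n => p.2) | p <- s].

Definition pis n (N : V -> R) (Q : set V) (t : tensor n) : \bar R :=
  ereal_inf [set (\sum_(p <- s) `|p.1| * N p.2 ^+ n)%:E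
            | s in [set s : seq (R * V) |
                     (forall p, p \in s -> Q p.2) /\ teq (powt n s) t]].
End Tensors.

Definition pis_E (E : ons) n (t : tensor E n) := pis (ons_norm E) setT t.
Definition pisplus_E (E : ons) n (t : tensor E n) := pis (ons_norm E) (ons_cone E) t.
Definition pis_Eplus (E : ons) n (t : tensor E n) := pis (@pnorm E) setT t.

Definition c_piss (n : nat) (E : ons) : \bar R :=
  ereal_sup [set (pisplus_E t * ((fine (pis_E t))^-1)%:E)%E
            | t in [set t : tensor E n | tsym t /\ ~ teq t [::]]].

Definition gamma_ok (n : nat) (C : R) : Prop :=
  forall E : ons, is_ons E -> forall t : tensor E n, tsym t ->
    (pisplus_E t <= C%:E * pis_Eplus t)%E.

Definition gamma (n : nat) : \bar R := ereal_inf [set C%:E | C in gamma_ok n].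

Definition l1m (m : nat) : ons :=
  @ONS ('rV[R]_m) (fun x => \sum_(i < m) `|x ord0 i|)
       [set x | forall i, 0 <= x ord0 i].

Definition l1pred : {pred nat -> R^o} :=
  fun x => `[< exists M : R, forall N, \sum_(k < N) `|x k| <= M >].

Lemma l1_closed : GRing.submod_closed l1pred.
Proof.
split.
  by rewrite unfold_in; apply/asboolP; exists 0 => N; rewrite big1 // => k _; rewrite normr0.
move=> a u v; rewrite !unfold_in => /asboolP [M1 H1] /asboolP [M2 H2].
apply/asboolP.
exists (`|a| * M1 + M2) => N.
apply: (@le_trans _ _ (\sum_(k < N) (`|a| * `|u k| + `|v k|))).
  apply: ler_sum => k _.
  have -> : (a *: u + v) k = a * u k + v k by [].
  by apply: (le_trans (ler_normD _ _)); rewrite normrM.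
rewrite big_split /= -mulr_sumr.
by apply: lerD; [apply: ler_wpM2l => //; exact: H1 | exact: H2].
Qed.

HB.instance Definition _ := GRing.isSubmodClosed.Build R (nat -> R^o) l1pred l1_closed.
Record l1_type := L1 { l1val : nat -> R^o; _ : l1val \in l1pred }.
HB.instance Definition _ := [isSub for l1val].
HB.instance Definition _ := [Choice of l1_type by <:].
HB.instance Definition _ := [SubChoice_isSubLmodule of l1_type by <:].

Definition l1 : ons :=
  @ONS l1_type (fun x => sup [set \sum_(k < N) `|l1val x k| | N in [set: nat]])
       [set x | forall k, 0 <= l1val x k].

Definition sup_ratio (n : nat) : \bar R :=
  ereal_sup [set r | exists E : ons,
                     is_ons E /\ r = (c_piss n E * ((cplus E ^+ n)^-1)%:E)%E].

Definition sup_cplus1 (n : nat) : \bar R :=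
  ereal_sup [set r | exists E : ons, [/\ is_ons E, cplus E = 1 & r = c_piss n E]].

End OrderedNormedSpaces.

(* Main.v *)
Require Import Defs.
From HB Require Import structures.
From mathcomp Require Import all_boot all_order all_algebra all_fingroup.
From mathcomp Require Import boolp classical_sets functions reals ereal.
From mathcomp Require Import ring lra.
Import Order.TTheory GRing.Theory Num.Theory.
Local Open Scope ring_scope.
Set Implicit Arguments. Unset Strict Implicit. Unset Printing Implicit Defensive.

Section Gen.
Variable R : realType.
Local Open Scope classical_set_scope.

Lemma pow_le (x y : R) k : 0 <= x -> x <= y -> x ^+ k <= y ^+ k.
Proof.
move=> x0 xy; apply: lerXn2r => //; rewrite nnegrE //; exact: le_trans xy.
Qed.

Lemma pow_bound (p d : R) k : 0 <= p -> 0 <= d -> d <= 1 ->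
  (p + d) ^+ k <= p ^+ k + d * (k%:R * (p + 1) ^+ k).
Proof.
move=> p0 d0 d1; elim: k => [|k IH]; first by rewrite !expr0 mul0r mulr0 addr0.
have q0 : 0 <= (p + 1) ^+ k by apply: exprn_ge0; lra.
have pk : p ^+ k <= (p + 1) ^+ k by apply: pow_le => //; lra.
have pk0 : 0 <= p ^+ k by apply: exprn_ge0.
rewrite !exprS.
apply: (le_trans (ler_wpM2l _ IH)); first lra.
rewrite -natr1.
set A := (p+1)^+k in q0 pk *; set B := p ^+ k in pk pk0 IH *.
have kk : 0 <= (k%:R : R) by [].
have h1 : d * B <= d * A by apply: ler_wpM2l.
have h2 : d * d * (k%:R * A) <= d * (k%:R * A).
  apply: ler_wpM2r; first exact: mulr_ge0.
  by rewrite -[X in _ <= X]mulr1; apply: ler_wpM2l.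
have h3 : 0 <= d * p * A by apply: mulr_ge0 => //; exact: mulr_ge0.
have -> : (p + d) * (B + d * (k%:R * A)) = p * B + d * B + p * d * (k%:R * A) + d * d * (k%:R * A) by ring.
have -> : p * B + d * ((k%:R + 1) * ((p + 1) * A)) = p * B + d * (k%:R * A) + d * p * A + d * A + p * d * (k%:R * A) by ring.
lra.
Qed.

Lemma lin0 (V : lmodType R) (f : V -> R) : lin f -> f 0 = 0.
Proof. move=> H; have := H 1 0 0; rewrite scaler0 addr0 mul1r; lra. Qed.

Lemma linZ (V : lmodType R) (f : V -> R) a x : lin f -> f (a *: x) = a * f x.
Proof. move=> H; have := H a x 0; rewrite addr0 (lin0 H) addr0 //. Qed.

Lemma linD (V : lmodType R) (f : V -> R) x y : lin f -> f (x + y) = f x + f y.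
Proof. move=> H; have := H 1 x y; rewrite scale1r mul1r //. Qed.

Lemma linB (V : lmodType R) (f : V -> R) x y : lin f -> f (x - y) = f x - f y.
Proof.
move=> H; rewrite (linD _ _ H) -scaleN1r (linZ _ _ H); lra.
Qed.

Definition Tf (V : lmodType R) n (s : seq (R * V)) (phi : 'I_n -> V -> R) :=
  \sum_(p <- s) p.1 * \prod_(i < n) phi i p.2.

Definition cost (V : lmodType R) (n : nat) (N : V -> R) (s : seq (R * V)) :=
  \sum_(p <- s) `|p.1| * N p.2 ^+ n.

Lemma tform_powt (V : lmodType R) n (s : seq (R * V)) phi :
  tform (powt n s) phi = Tf s phi.
Proof. by rewrite /tform /powt big_map. Qed.

Lemma tsym_powt (V : lmodType R) n (s : seq (R * V)) : tsym (powt n s).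
Proof.
move=> sg phi _; rewrite !tform_powt /Tf; apply: eq_bigr => p _; congr (_ * _).
by rewrite [RHS](reindex_inj (@perm_inj _ sg)).
Qed.

Lemma Tf_cat (V : lmodType R) (n : nat) (s1 s2 : seq (R * V)) (phi : 'I_n -> V -> R) :
  Tf (s1 ++ s2) phi = Tf s1 phi + Tf s2 phi :> R.
Proof. by rewrite /Tf big_cat. Qed.

Lemma cost_cat (V : lmodType R) (n : nat) (N : V -> R) (s1 s2 : seq (R * V)) :
  cost n N (s1 ++ s2) = cost n N s1 + cost n N s2.
Proof. by rewrite /cost big_cat. Qed.

Lemma cost_ge0 (V : lmodType R) (n : nat) (N : V -> R) s :
  (forall v, 0 <= N v) -> 0 <= cost n N s.
Proof.
move=> H; apply: sumr_ge0 => p _; apply: mulr_ge0 => //; exact: exprn_ge0.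
Qed.

Lemma pis_ge0 (V : lmodType R) (n : nat) (N : V -> R) (Q : set V) (t : tensor V n) :
  (forall v, 0 <= N v) -> (0 <= pis N Q t)%E.
Proof.
move=> H; apply: le_ereal_inf_tmp => _ [s _ <-]; rewrite lee_fin.
exact: (cost_ge0 n s H).
Qed.

Lemma pis_le (V : lmodType R) (n : nat) (N : V -> R) (Q : set V) (t : tensor V n) s :
  (forall p, p \in s -> Q p.2) -> teq (powt n s) t ->
  (pis N Q t <= (cost n N s)%:E)%E.
Proof. by move=> H1 H2; apply: ge_ereal_inf; exists (cost n N s)%:E => //; exists s. Qed.

Lemma pis_ub (V : lmodType R) (n : nat) (N : V -> R) (Q : set V) w :
  Q w -> (pis N Q (powt n [:: (1%R, w)]) <= (N w ^+ n)%:E)%E.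
Proof.
move=> Qw; apply: (le_trans (pis_le N (s := [:: (1%R, w)]) _ _)).
- by move=> p; rewrite inE => /eqP ->.
- by [].
by rewrite /cost big_seq1 /= normr1 mul1r.
Qed.

Lemma prod_const_ord n (x : R) : \prod_(i < n) x = x ^+ n.
Proof. by rewrite prodr_const card_ord. Qed.

Lemma pis_lb (V : lmodType R) (n : nat) (N : V -> R) (Q : set V) (t : tensor V n) (g : V -> R) w :
  lin g -> (forall v, `|g v| <= N v) -> teq t (powt n [:: (1%R, w)]) ->
  ((`|g w| ^+ n)%:E <= pis N Q t)%E.
Proof.
move=> lg gN ht; apply: le_ereal_inf_tmp => _ [s [_ hs] <-]; rewrite lee_fin.
have H := hs (fun _ => g) (fun _ => lg); rewrite (ht (fun _ => g) (fun _ => lg)) !tform_powt /Tf big_seq1 /= mul1r in H.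
rewrite -normrX -prod_const_ord -H.
apply: (le_trans (ler_norm_sum _ _ _)); apply: ler_sum => p _.
rewrite prod_const_ord normrM normrX; apply: ler_wpM2l => //.
by apply: pow_le => //.
Qed.

Lemma le_mul_inf T (S : set T) (f : T -> R) (x : \bar R) (c : R) : 0 < c ->
  (forall s, S s -> (x <= (c * f s)%:E)%E) ->
  (x <= c%:E * ereal_inf [set (f s)%:E | s in S])%E.
Proof.
move=> c0 H; rewrite muleC -lee_pdivrMr //; apply: le_ereal_inf_tmp => _ [s Ss <-].
by rewrite lee_pdivrMr // -EFinM mulrC; exact: H.
Qed.

End Gen.

Section OnsGen.
Variable R : realType.
Local Open Scope classical_set_scope.
Variable E : ons R.
Hypothesis HE : is_ons E.
Local Notation N := (@ons_norm R E).
Local Notation P := (@ons_cone R E).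
Implicit Types (x y z u : E).

Lemma N_all : is_norm N. Proof. by case: HE. Qed.
Lemma N_ge0 x : 0 <= N x. Proof. by case: N_all. Qed.
Lemma N_eq0 x : N x = 0 -> x = 0. Proof. by case: N_all => _ H _ _; exact: H. Qed.
Lemma NZ a x : N (a *: x) = `|a| * N x. Proof. by case: N_all. Qed.
Lemma ND x y : N (x + y) <= N x + N y. Proof. by case: N_all. Qed.
Lemma NN x : N (- x) = N x.
Proof. by rewrite -scaleN1r NZ normrN normr1 mul1r. Qed.
Lemma N0 : N 0 = 0.
Proof. by rewrite -(scale0r (0 : E)) NZ normr0 mul0r. Qed.
Lemma NB x y : N (x - y) <= N x + N y.
Proof. by apply: (le_trans (ND _ _)); rewrite NN. Qed.
Lemma P_all : is_closed_convex_cone N P. Proof. by case: HE. Qed.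
Lemma P0 : P 0. Proof. by case: P_all. Qed.
Lemma PD x y : P x -> P y -> P (x + y). Proof. by case: P_all => _ H _ _; exact: H. Qed.
Lemma PZ a x : 0 <= a -> P x -> P (a *: x). Proof. by case: P_all => _ _ H _; exact: H. Qed.
Lemma Pcl x : (forall e : R, 0 < e -> exists2 p, P p & N (x - p) < e) -> P x.
Proof. by case: P_all => _ _ _ H; exact: H. Qed.
Lemma gen x : exists y z : E, [/\ P y, P z & x = y - z].
Proof. by case: HE => _ _ H _; exact: H. Qed.

Definition Pset (x : E) := [set r | exists y z : E, [/\ P y, P z, x = y - z
                             & r = N y + N z]].
Lemma pnormE x : pnorm x = inf (Pset x). Proof. by []. Qed.
Lemma Pset_ne x : Pset x !=set0.
Proof. by have [y [z [Py Pz ->]]] := gen x; exists (N y + N z), y, z. Qed.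
Lemma Pset_lb x : has_lbound (Pset x).
Proof.
by exists 0 => _ [y [z [_ _ _ ->]]]; apply: addr_ge0; exact: N_ge0.
Qed.
Lemma pnorm_ge0 x : 0 <= pnorm x.
Proof.
rewrite pnormE; apply: lb_le_inf; first exact: Pset_ne.
by move=> _ [y [z [_ _ _ ->]]]; apply: addr_ge0; exact: N_ge0.
Qed.
Lemma pnorm_geN x : N x <= pnorm x.
Proof.
rewrite pnormE; apply: lb_le_inf; first exact: Pset_ne.
by move=> _ [y [z [_ _ -> ->]]]; exact: NB.
Qed.
Lemma pnorm_le x y z : P y -> P z -> x = y - z -> pnorm x <= N y + N z.
Proof.
move=> Py Pz xe; rewrite pnormE; apply: ge_inf; first exact: Pset_lb.
by exists y, z.
Qed.
Lemma pnorm_adh x e : 0 < e -> exists y z : E,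
  [/\ P y, P z, x = y - z & N y + N z < pnorm x + e].
Proof.
move=> e0; have [r [y [z [Py Pz xe ->]]] H] := inf_adherent e0 (conj (Pset_ne x) (Pset_lb x)).
by exists y, z.
Qed.
Lemma pnorm0 : pnorm (0 : E) = 0.
Proof.
apply: le_anti; rewrite pnorm_ge0 andbT.
by have := @pnorm_le 0 0 0 P0 P0 (esym (subr0 _)); rewrite N0 addr0.
Qed.
Lemma pnorm_scale c u : 0 < c -> pnorm (c *: u) <= c * pnorm u.
Proof.
move=> c0; rewrite -ler_pdivrMl // [X in _ <= X]pnormE.
apply: lb_le_inf; first exact: Pset_ne.
move=> _ [y [z [Py Pz -> ->]]]; rewrite ler_pdivrMl //.
apply: (le_trans (@pnorm_le _ (c *: y) (c *: z) _ _ _)).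
- by apply: PZ => //; exact: ltW.
- by apply: PZ => //; exact: ltW.
- by rewrite scalerBr.
by rewrite !NZ gtr0_norm // mulrDr.
Qed.

Definition Bset := [set pnorm x | x in [set x : E | N x <= 1]].
Lemma Bset_sup : has_sup Bset.
Proof.
split; first by exists (pnorm (0:E)), 0 => //=; rewrite N0.
case: HE => _ _ _ [C HC]; exists C => _ [x hx <-]; exact: HC.
Qed.
Lemma cplusE : cplus E = sup Bset. Proof. by []. Qed.
Lemma le_cplus x : N x <= 1 -> pnorm x <= cplus E.
Proof. by move=> hx; rewrite cplusE; apply: sup_upper_bound; [exact: Bset_sup | exists x]. Qed.
Lemma cplus_ge0 : 0 <= cplus E.
Proof. by apply: le_trans (pnorm_ge0 (0:E)) (le_cplus _); rewrite N0. Qed.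
Lemma pnorm_cplus x : pnorm x <= cplus E * N x.
Proof.
have [Nx0|Nx0] := eqVneq (N x) 0.
  by rewrite (N_eq0 Nx0) pnorm0 N0 mulr0.
have Np : 0 < N x by rewrite lt_neqAle eq_sym Nx0 N_ge0.
set u := (N x)^-1 *: x.
have xe : x = N x *: u by rewrite /u scalerA mulfV // scale1r.
rewrite [in X in pnorm X]xe.
apply: (le_trans (pnorm_scale _ Np)).
rewrite mulrC; apply: ler_wpM2r; first exact: N_ge0.
by apply: le_cplus; rewrite NZ ger0_norm ?invr_ge0 ?N_ge0 // mulVf.
Qed.

End OnsGen.

Section Ratio.
Variable R : realType.
Variable n : nat.
Hypothesis n0 : (0 < n)%N.
Local Open Scope classical_set_scope.

Lemma ratio_le (E : ons R) (D : R) : is_ons E -> 0 <= D ->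
  (forall t : tensor E n, tsym t -> (pisplus_E t <= D%:E * pis_E t)%E) ->
  (c_piss n E <= D%:E)%E.
Proof.
move=> HE D0 H; apply: ge_ereal_sup => _ [t [ts tn] <-].
have := H t ts.
have : (0 <= pis_E t)%E by apply: pis_ge0 => v; exact: N_ge0.
case: (pis_E t) => [r| |] //= r0 Hle.
- have [r00|rn0] := eqVneq r 0; first by rewrite r00 invr0 mule0 lee_fin.
  have rp : 0 < r by rewrite lt_neqAle eq_sym rn0 -lee_fin.
  by rewrite lee_pdivrMr // muleC.
- by rewrite invr0 mule0 lee_fin.
Qed.

Lemma pisEplus_le (E : ons R) (t : tensor E n) : is_ons E -> 0 < cplus E ->
  (pis_Eplus t <= ((cplus E)^+n)%:E * pis_E t)%E.
Proof.
move=> HE cp; apply: le_mul_inf; first exact: exprn_gt0.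
move=> s [_ hs]; apply: (le_trans (pis_le _ _ hs)) => //.
rewrite lee_fin /cost mulr_sumr; apply: ler_sum => p _.
rewrite mulrCA; apply: ler_wpM2l => //; rewrite -exprMn; apply: pow_le.
  exact: pnorm_ge0.
exact: pnorm_cplus.
Qed.

Lemma ratio_cplus (E : ons R) (C : R) : is_ons E -> gamma_ok n C -> 0 <= C ->
  (c_piss n E * (((cplus E) ^+ n)^-1)%:E <= C%:E)%E.
Proof.
move=> HE HC C0.
have [c0|cp] := eqVneq (cplus E) 0.
  by rewrite c0 expr0n eqn0Ngt n0 /= invr0 mule0 lee_fin.
have cpos : 0 < cplus E by rewrite lt_neqAle eq_sym cp cplus_ge0.
have kp : 0 < cplus E ^+ n := exprn_gt0 _ cpos.
rewrite lee_pdivrMr //.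
rewrite -EFinM; apply: ratio_le => //; first by apply: mulr_ge0 => //; exact: ltW.
move=> t ts; apply: (le_trans (HC E HE t ts)).
rewrite EFinM -muleA; apply: lee_wpmul2l; first by rewrite lee_fin.
exact: pisEplus_le.
Qed.

End Ratio.

Section Good.
Variable R : realType.
Variable n : nat.
Hypothesis n0 : (0 < n)%N.
Local Open Scope classical_set_scope.
Variable E' : ons R.
Hypothesis HE' : is_ons E'.
Local Notation N' := (@ons_norm R E').
Local Notation P' := (@ons_cone R E').
Hypothesis Hpn : forall x : E', pnorm x = N' x.
Variables (f1 f2 : E' -> R) (e1 e2 : E').
Hypotheses (lf1 : lin f1) (lf2 : lin f2).
Hypothesis Hfpos : forall v, P' v -> 0 <= f1 v /\ 0 <= f2 v.
Hypothesis Hfn : forall v, `|f1 v| + `|f2 v| <= N' v.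
Hypotheses (Ne1 : N' e1 <= 1) (Ne2 : N' e2 <= 1).
Hypotheses (f1e1 : f1 e1 = 1) (f2e1 : f2 e1 = 0) (f1e2 : f1 e2 = 0) (f2e2 : f2 e2 = 1).

Lemma f1N v : `|f1 v| <= N' v.
Proof. by apply: le_trans (Hfn v); rewrite lerDl. Qed.
Lemma f2N v : `|f2 v| <= N' v.
Proof. by apply: le_trans (Hfn v); rewrite lerDr. Qed.

Lemma pisE_eq (t : tensor E' n) : pis_Eplus t = pis_E t.
Proof.
rewrite /pis_Eplus /pis_E.
have -> : (@pnorm R E') = N' by apply: funext => x; exact: Hpn.
by [].
Qed.

Definition te1 := powt n [:: (1%R, e1)].

Lemma te1_pis : pis_E te1 = 1%:E.
Proof.
apply: le_anti; apply/andP; split.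
  apply: le_trans (pis_ub _ _ I) _; rewrite lee_fin; apply: exprn_ile1 => //.
  exact: N_ge0.
have := @pis_lb R E' n N' setT te1 f1 e1 lf1 f1N (fun _ _ => erefl).
by rewrite f1e1 normr1 expr1n.
Qed.

Lemma te1_pisplus : (1%:E <= pisplus_E te1)%E.
Proof.
have := @pis_lb R E' n N' P' te1 f1 e1 lf1 f1N (fun _ _ => erefl).
by rewrite f1e1 normr1 expr1n.
Qed.

Lemma te1_nz : ~ teq te1 [::].
Proof.
move=> H; have := H (fun _ => f1) (fun _ => lf1).
rewrite /te1 tform_powt /Tf big_seq1 /= mul1r /tform big_nil prod_const_ord f1e1 expr1n.
by move/eqP; rewrite oner_eq0.
Qed.

Lemma c_ge1 : (1%:E <= c_piss n E')%E.
Proof.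
apply: le_trans (te1_pisplus) _; apply: ereal_sup_ubound; exists te1.
  by split; [exact: tsym_powt | exact: te1_nz].
by rewrite te1_pis /= invr1 mule1.
Qed.

Lemma gok_ge1 (C : R) : gamma_ok n C -> 1 <= C.
Proof.
move=> HC; have := HC E' HE' te1 (@tsym_powt R E' n _).
rewrite pisE_eq te1_pis mule1 => h; rewrite -lee_fin.
exact: le_trans te1_pisplus h.
Qed.

Lemma cB (C : R) : gamma_ok n C -> (c_piss n E' <= C%:E)%E.
Proof.
move=> HC; apply: ratio_le => //; first by apply: le_trans (gok_ge1 HC).
by move=> t ts; rewrite -pisE_eq; exact: HC.
Qed.

Section A.
Variable C : R.
Hypothesis Hc : (c_piss n E' <= C%:E)%E.

Lemma C_ge1 : 1 <= C.
Proof. by rewrite -lee_fin; apply: le_trans Hc; exact: c_ge1. Qed.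

Lemma wbound (w : E') (g : E' -> R) :
  lin g -> (forall v, `|g v| <= N' v) -> g w != 0 ->
  (pisplus_E (powt n [:: (1%R, w)]) <= (C * N' w ^+ n)%:E)%E.
Proof.
move=> lg gN gw.
set t := powt n [:: (1%R, w)].
have lb : ((`|g w| ^+ n)%:E <= pis_E t)%E := pis_lb _ lg gN (fun _ _ => erefl).
have ub : (pis_E t <= (N' w ^+ n)%:E)%E := pis_ub _ _ I.
have pos : 0 < `|g w| ^+ n by apply: exprn_gt0; rewrite normr_gt0.
have C1 := C_ge1.
have el : (pisplus_E t * ((fine (pis_E t))^-1)%:E <= C%:E)%E.
  apply: le_trans Hc; apply: ereal_sup_ubound; exists t => //.
  split; first exact: tsym_powt.
  move=> H; have := H (fun _ => g) (fun _ => lg).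
  rewrite /t tform_powt /Tf big_seq1 /= mul1r /tform big_nil prod_const_ord.
  by apply/eqP; exact: expf_neq0.
move: lb ub el; case: (pis_E t) => [r| |] // lb ub el.
rewrite lee_fin in lb; rewrite lee_fin in ub.
have rp : 0 < r := lt_le_trans pos lb.
rewrite /= lee_pdivrMr // in el.
apply: le_trans el _; rewrite -EFinM lee_fin; apply: ler_wpM2l => //.
by apply: le_trans C1.
Qed.

Section Target.
Variable E : ons R.
Hypothesis HE : is_ons E.
Local Notation N := (@ons_norm R E).
Local Notation P := (@ons_cone R E).

Lemma step (a : R) (x : E) : exists M : R, forall d : R, 0 < d ->
  exists s' : seq (R * E), [/\ (forall p, p \in s' -> P p.2),
     (forall phi : 'I_n -> E -> R, (forall i, lin (phi i)) ->
        Tf s' phi = a * \prod_(i < n) phi i x) &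
     cost n N s' <= `|a| * (C * pnorm x ^+ n) + d * M].
Proof.
set p := pnorm x.
have p0 : 0 <= p := pnorm_ge0 HE x.
have C1 := C_ge1.
set K := n%:R * (p + 1) ^+ n.
have K0 : 0 <= K by apply: mulr_ge0 => //; apply: exprn_ge0; lra.
exists (`|a| * (C * K + 1)) => d d0.
have M0 : 0 <= `|a| * (C * K + 1).
  apply: mulr_ge0 => //; apply: addr_ge0 => //; apply: mulr_ge0 => //; lra.
set d' := Num.min d 1.
have d'0 : 0 < d' by rewrite lt_min d0 ltr01.
have d'd : d' <= d by rewrite ge_min lexx.
have d'1 : d' <= 1 by rewrite ge_min lexx orbT.
have [y [z [Py Pz xe yz]]] := pnorm_adh HE x d'0.
set al := N y; set be := N z.
have al0 : 0 <= al := N_ge0 HE y.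
have be0 : 0 <= be := N_ge0 HE z.
have [/andP [/eqP a0 /eqP b0] | nz] := boolP ((al == 0) && (be == 0)).
  exists [::]; split => //.
  - move=> phi lphi; rewrite /Tf big_nil.
    have -> : x = 0 by rewrite xe (N_eq0 HE a0) (N_eq0 HE b0) subrr.
    by rewrite (bigD1 (Ordinal n0)) //= lin0 // mul0r mulr0.
  - rewrite /cost big_nil; apply: addr_ge0; last exact: mulr_ge0 (ltW d0) M0.
    apply: mulr_ge0 => //; apply: mulr_ge0; [lra | exact: exprn_ge0].
set yh := al^-1 *: y; set zh := be^-1 *: z.
have ye : al *: yh = y.
  have [a0|an0] := eqVneq al 0; first by rewrite a0 scale0r (N_eq0 HE a0).
  by rewrite /yh scalerA mulfV // scale1r.
have ze : be *: zh = z.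
  have [b0|bn0] := eqVneq be 0; first by rewrite b0 scale0r (N_eq0 HE b0).
  by rewrite /zh scalerA mulfV // scale1r.
have Nyh : N yh <= 1.
  rewrite /yh (NZ HE) normfV -/al (ger0_norm al0).
  have [a0|an0] := eqVneq al 0; first by rewrite a0 invr0 mul0r ler01.
  by rewrite mulVf.
have Nzh : N zh <= 1.
  rewrite /zh (NZ HE) normfV -/be (ger0_norm be0).
  have [b0|bn0] := eqVneq be 0; first by rewrite b0 invr0 mul0r ler01.
  by rewrite mulVf.
have Pyh : P yh by apply: (PZ HE) => //; rewrite invr_ge0.
have Pzh : P zh by apply: (PZ HE) => //; rewrite invr_ge0.
pose T := fun v : E' => f1 v *: yh + f2 v *: zh.
have Tlin : forall c v u, T (c *: v + u) = c *: T v + T u.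
  move=> c v u; rewrite /T (lf1 c v u) (lf2 c v u) !scalerDl !scalerDr !scalerA.
  by rewrite addrACA.
have TP : forall v, P' v -> P (T v).
  move=> v Pv; have [h1 h2] := Hfpos Pv.
  by apply: (PD HE); apply: (PZ HE).
have TN : forall v, N (T v) <= N' v.
  move=> v; apply: le_trans (ND HE _ _) _; rewrite (NZ HE (f1 v)) (NZ HE (f2 v)).
  apply: le_trans (Hfn v); apply: lerD; rewrite -[X in _ <= X]mulr1;
    apply: ler_wpM2l => //.
set w := al *: e1 - be *: e2.
have f1w : f1 w = al by rewrite /w (linB _ _ lf1) !(linZ _ _ lf1) f1e1 f1e2; lra.
have f2w : f2 w = - be by rewrite /w (linB _ _ lf2) !(linZ _ _ lf2) f2e1 f2e2; lra.
have Tw : T w = x by rewrite /T f1w f2w ye scaleNr ze xe.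
have Nw : N' w <= p + d'.
  apply: le_trans (NB HE' _ _) _; rewrite !(NZ HE') !ger0_norm //.
  have h1 : al * N' e1 <= al by rewrite -[X in _ <= X]mulr1; apply: ler_wpM2l.
  have h2 : be * N' e2 <= be by rewrite -[X in _ <= X]mulr1; apply: ler_wpM2l.
  have yz' : al + be < pnorm x + d' by exact: yz.
  lra.
have hw : (pisplus_E (powt n [:: (1%R, w)]) <= (C * N' w ^+ n)%:E)%E.
  have [a0|an0] := eqVneq al 0.
    have bn0 : be != 0 by move: nz; rewrite a0 eqxx.
    by apply: (wbound lf2 f2N); rewrite f2w oppr_eq0.
  by apply: (wbound lf1 f1N); rewrite f1w.
have hlt : (pisplus_E (powt n [:: (1%R, w)]) < (C * N' w ^+ n + d')%:E)%E.
  by apply: le_lt_trans hw _; rewrite lte_fin ltrDl.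
have [_ [sw [swP swT] <-] swc] := ereal_inf_lt hlt.
rewrite lte_fin in swc.
exists (map (fun q : R * E' => (a * q.1, T q.2)) sw); split.
- by move=> q /mapP [q' q'in ->]; exact: TP (swP q' q'in).
- move=> phi lphi.
  have lT : forall i, lin (fun v => phi i (T v)).
    by move=> i c v u; rewrite Tlin (lphi i).
  have := swT (fun i v => phi i (T v)) lT.
  rewrite !tform_powt /Tf big_seq1 /= mul1r Tw => H.
  rewrite big_map /= -H mulr_sumr; apply: eq_bigr => q _; by rewrite mulrA.
- rewrite /cost big_map /=.
  have h1 : \sum_(q <- sw) `|a * q.1| * N (T q.2) ^+ n <= `|a| * cost n N' sw.
    rewrite /cost mulr_sumr; apply: ler_sum => q _; rewrite normrM -mulrA.
    apply: ler_wpM2l => //; apply: ler_wpM2l => //; apply: pow_le.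
      exact: N_ge0.
    exact: TN.
  have pw : N' w ^+ n <= p ^+ n + d' * K.
    apply: le_trans (pow_bound n p0 (ltW d'0) d'1).
    by apply: pow_le => //; exact: N_ge0.
  apply: le_trans h1 _.
  have h2 : `|a| * cost n N' sw <= `|a| * (C * (p ^+ n + d' * K) + d').
    apply: ler_wpM2l => //; apply: le_trans (ltW swc) _; rewrite lerD2r.
    by apply: ler_wpM2l => //; lra.
  apply: le_trans h2 _.
  have -> : `|a| * (C * (p ^+ n + d' * K) + d') = `|a| * (C * p ^+ n) + d' * (`|a| * (C * K + 1)) by ring.
  by rewrite lerD2l; apply: ler_wpM2r.
Qed.

Lemma combine (s : seq (R * E)) : exists M : R, forall d : R, 0 < d ->
  exists s' : seq (R * E), [/\ (forall p, p \in s' -> P p.2),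
     (forall phi : 'I_n -> E -> R, (forall i, lin (phi i)) -> Tf s' phi = Tf s phi) &
     cost n N s' <= C * cost n (@pnorm R E) s + d * M].
Proof.
elim: s => [|[a x] s [M2 IH]].
  exists 0 => d d0; exists [::]; split => //.
  by rewrite /cost !big_nil mulr0 mulr0 addr0.
have [M1 H1] := step a x.
exists (M1 + M2) => d d0.
have [s1 [Q1 T1 c1]] := H1 d d0; have [s2 [Q2 T2 c2]] := IH d d0.
exists (s1 ++ s2); split.
- by move=> q; rewrite mem_cat => /orP []; [exact: Q1 | exact: Q2].
- by move=> phi lphi; rewrite Tf_cat T1 // T2 // /Tf big_cons.
- rewrite cost_cat; move: c1 c2; rewrite /cost big_cons /= => c1 c2.
  set A := \sum_(p <- s) _ in c2 *.
  lra.
Qed.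

Lemma gok_t (t : tensor E n) : (pisplus_E t <= C%:E * pis_Eplus t)%E.
Proof.
have C1 := C_ge1.
apply: le_mul_inf; first lra.
move=> s [_ hs].
have [M HM] := combine s.
have key : forall d, 0 < d -> (pisplus_E t <= (C * cost n (@pnorm R E) s + d * M)%:E)%E.
  move=> d d0; have [s' [Q' T' c']] := HM d d0.
  apply: le_trans (pis_le _ (s:=s') Q' _) _.
  - by move=> phi lphi; rewrite tform_powt T' // -tform_powt; exact: hs.
  - by rewrite lee_fin.
move: (key 1 ltr01); case: (pisplus_E t) key => [q| |] key // h.
rewrite lee_fin; apply/ler_addgt0Pr => e e0.
have Mp : 0 < 1 + `|M| by apply: ltr_pwDl => //.
have := key (e / (1 + `|M|)) (divr_gt0 e0 Mp).
rewrite lee_fin => h'; apply: le_trans h' _; rewrite /cost lerD2l.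
rewrite mulrAC ler_pdivrMr //; apply: ler_wpM2l; first exact: ltW.
by apply: le_trans (ler_norm M) _; rewrite lerDr.
by rewrite leNye.
Qed.

End Target.

Lemma cA : gamma_ok n C.
Proof. by move=> E HE t _; exact: gok_t. Qed.

End A.

Lemma cplus_good : cplus E' = 1.
Proof.
apply: le_anti; apply/andP; split.
  rewrite cplusE //; apply: ge_sup; first by exists (pnorm (0 : E')), 0 => //=; rewrite N0.
  by move=> _ [x hx <-]; rewrite Hpn.
apply: le_trans (le_cplus HE' Ne1); rewrite Hpn.
by apply: le_trans (Hfn e1); rewrite f1e1 normr1 lerDl.
Qed.

Lemma c_good : c_piss n E' = gamma R n.
Proof.
apply: le_anti; apply/andP; split.
  by apply: le_ereal_inf_tmp => _ [C HC <-]; exact: cB.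
move: c_ge1; case ce: (c_piss n E') => [r| |] // _.
  by apply: ge_ereal_inf; exists r%:E => //; exists r => //; apply: cA; rewrite ce.
by rewrite leey.
Qed.

End Good.

Section Mk.
Variable R : realType.
Local Open Scope classical_set_scope.
Variable E : ons R.
Local Notation N := (@ons_norm R E).
Local Notation P := (@ons_cone R E).
Hypothesis Hn : is_norm N.
Hypothesis Hc : is_closed_convex_cone N P.
Hypothesis Hd : forall x : E, exists y z : E, [/\ P y, P z, x = y - z & N y + N z <= N x].

Lemma mk_ons : is_ons E.
Proof.
split => //.
  by move=> x; have [y [z [Py Pz xe _]]] := Hd x; exists y, z.
exists 1 => x hx; have [y [z [Py Pz xe h]]] := Hd x.
apply: le_trans hx; apply: le_trans h; apply: ge_inf.
  by exists 0 => _ [y' [z' [_ _ _ ->]]]; case: Hn => H _ _ _; apply: addr_ge0.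
by exists y, z.
Qed.

Lemma mk_pn (x : E) : pnorm x = N x.
Proof.
apply: le_anti; rewrite pnorm_geN ?andbT; last exact: mk_ons.
have [y [z [Py Pz xe h]]] := Hd x.
by apply: le_trans h; apply: pnorm_le => //; exact: mk_ons.
Qed.
End Mk.

Definition ppart (R : realType) (a : R) := (a + `|a|) / 2.
Definition npart (R : realType) (a : R) := (`|a| - a) / 2.
Lemma maxpart (R : realType) (a : R) :
  [/\ ppart a - npart a = a, 0 <= ppart a, 0 <= npart a
    & `|ppart a| + `|npart a| = `|a|].
Proof.
have h1 := ler_norm a; have h2 := ler_norm (- a); rewrite normrN in h2.
have p0 : 0 <= ppart a by rewrite /ppart; apply: divr_ge0; lra.
have q0 : 0 <= npart a by rewrite /npart; apply: divr_ge0; lra.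
split => //; first by rewrite /ppart /npart; field.
by rewrite (ger0_norm p0) (ger0_norm q0) /ppart /npart; field.
Qed.

Section L1m.
Variable R : realType.
Variable m : nat.
Hypothesis m2 : (2 <= m)%N.
Local Notation E := (l1m R m).
Local Notation N := (@ons_norm R E).
Local Notation P := (@ons_cone R E).

Lemma l1m_coord (x : E) i : `|x ord0 i| <= N x.
Proof.
by rewrite /= (bigD1 i) //= lerDl; apply: sumr_ge0 => j _.
Qed.

Lemma l1m_norm : is_norm N.
Proof.
split.
- by move=> x; apply: sumr_ge0.
- move=> x H; apply/rowP => i; rewrite mxE; apply/normr0_eq0.
  by apply: le_anti; rewrite normr_ge0 andbT -H l1m_coord.
- by move=> a x; rewrite /= mulr_sumr; apply: eq_bigr => i _; rewrite mxE normrM.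
- move=> x y; rewrite /= -big_split /=; apply: ler_sum => i _; rewrite mxE.
  exact: ler_normD.
Qed.

Lemma l1m_cone : is_closed_convex_cone N P.
Proof.
split.
- by move=> i; rewrite mxE.
- by move=> x y Px Py i; rewrite mxE; apply: addr_ge0; [exact: Px | exact: Py].
- by move=> a x a0 Px i; rewrite mxE; apply: mulr_ge0 => //; exact: Px.
- move=> x H i; rewrite leNgt; apply/negP => xi.
  have xi0 : 0 < - x ord0 i by rewrite oppr_gt0.
  have [p Pp hp] := H (- x ord0 i) xi0.
  have := le_lt_trans (l1m_coord (x - p) i) hp; rewrite !mxE.
  have := Pp i; have := ler_norm (- (x ord0 i - p ord0 i)); rewrite normrN.
  lra.
Qed.

Lemma l1m_dec (x : E) : exists y z : E, [/\ P y, P z, x = y - z & N y + N z <= N x].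
Proof.
exists (map_mx (@ppart R) x), (map_mx (@npart R) x).
split.
- by move=> i; rewrite mxE; case: (maxpart (x ord0 i)).
- by move=> i; rewrite mxE; case: (maxpart (x ord0 i)).
- by apply/rowP => i; rewrite !mxE; case: (maxpart (x 0 i)).
rewrite /= -big_split /=; apply: ler_sum => i _; rewrite !mxE.
by case: (maxpart (x ord0 i)) => _ _ _ ->.
Qed.

Lemma l1m_good : c_piss 1 E = c_piss 1 E. Proof. by []. Qed.

Definition i0 : 'I_m := Ordinal (leq_trans (isT : (0 < 2)%N) m2).
Definition i1 : 'I_m := Ordinal m2.
Definition l1m_e (i : 'I_m) : E := \row_(j < m) (if j == i then 1 else 0).
Definition l1m_f (i : 'I_m) (v : E) : R := v ord0 i.

Lemma l1m_lin i : lin (l1m_f i).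
Proof. by move=> a x y; rewrite /l1m_f !mxE. Qed.

Lemma l1m_fn v : `|l1m_f i0 v| + `|l1m_f i1 v| <= N v.
Proof.
rewrite /l1m_f /= (bigD1 i0) //= (bigD1 i1) //= addrA lerDl.
by apply: sumr_ge0.
Qed.

Lemma l1m_eN i : N (l1m_e i) <= 1.
Proof.
rewrite /= (bigD1 i) //= big1 ?mxE ?eqxx ?normr1 ?addr0 //.
by move=> j /negbTE ji; rewrite mxE ji normr0.
Qed.

Lemma l1m_fe i j : l1m_f i (l1m_e j) = if i == j then 1 else 0.
Proof. by rewrite /l1m_f mxE. Qed.

Lemma i01 : (i1 == i0) = false. Proof. by []. Qed.

Lemma l1m_c (n : nat) : (0 < n)%N -> c_piss n E = gamma R n.
Proof.
move=> n0.
have HE := mk_ons l1m_norm l1m_cone l1m_dec.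
apply: (@c_good R n n0 E HE (mk_pn l1m_norm l1m_cone l1m_dec) (l1m_f i0) (l1m_f i1)
  (l1m_e i0) (l1m_e i1) (l1m_lin i0) (l1m_lin i1)).
- by move=> v Pv; split; exact: Pv.
- exact: l1m_fn.
- exact: l1m_eN.
- exact: l1m_eN.
- by rewrite l1m_fe eqxx.
- by rewrite l1m_fe i01.
- by rewrite l1m_fe eq_sym i01.
- by rewrite l1m_fe eqxx.
Qed.

Lemma l1m_ons : is_ons E.
Proof. exact: mk_ons l1m_norm l1m_cone l1m_dec. Qed.

Lemma l1m_cplus : cplus E = 1.
Proof.
apply: (@cplus_good R E l1m_ons (mk_pn l1m_norm l1m_cone l1m_dec) (l1m_f i0) (l1m_f i1) (l1m_e i0)).
- exact: l1m_fn.
- exact: l1m_eN.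
- by rewrite l1m_fe eqxx.
Qed.

Lemma l1m_gok (n : nat) (C : R) : gamma_ok n C -> 1 <= C.
Proof.
apply: (@gok_ge1 R n E l1m_ons (mk_pn l1m_norm l1m_cone l1m_dec) (l1m_f i0) (l1m_f i1) (l1m_e i0) (l1m_lin i0)).
- exact: l1m_fn.
- exact: l1m_eN.
- by rewrite l1m_fe eqxx.
Qed.

End L1m.

Section L1.
Variable R : realType.
Local Open Scope classical_set_scope.
Local Notation E := (l1 R).
Local Notation N := (@ons_norm R E).
Local Notation P := (@ons_cone R E).

Definition PS (f : nat -> R) (K : nat) := \sum_(k < K) `|f k|.

Lemma PS_ge0 f K : 0 <= PS f K.
Proof. by apply: sumr_ge0. Qed.

Lemma PS_mono f K K' : (K <= K')%N -> PS f K <= PS f K'.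
Proof.
elim: K' => [|K' IH] KK.
  by move: KK; rewrite leqn0 => /eqP ->.
rewrite leq_eqVlt in KK; case/orP: KK => [/eqP ->|KK] //.
apply: le_trans (IH KK) _; rewrite [X in _ <= X]/PS big_ord_recr /= lerDl.
exact: normr_ge0.
Qed.

Lemma l1_bd (x : l1_type R) : exists M, forall K, PS (l1val x) K <= M.
Proof. by have := valP x; rewrite /= unfold_in => /asboolP. Qed.

Lemma l1_mem (f : nat -> R^o) B : (forall K, PS f K <= B) -> f \in @l1pred R.
Proof. by move=> H; rewrite unfold_in; apply/asboolP; exists B. Qed.

Lemma PS_sup (x : E) : has_sup [set PS (l1val x) K | K in [set: nat]].
Proof.
split; first by exists (PS (l1val x) 0), 0.
by have [M HM] := l1_bd x; exists M => _ [K _ <-].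
Qed.

Lemma l1NE (x : E) : N x = sup [set PS (l1val x) K | K in [set: nat]].
Proof. by []. Qed.

Lemma PS_le (x : E) K : PS (l1val x) K <= N x.
Proof. by rewrite l1NE; apply: sup_upper_bound; [exact: PS_sup | exists K]. Qed.

Lemma N_le (x : E) B : (forall K, PS (l1val x) K <= B) -> N x <= B.
Proof.
move=> H; rewrite l1NE; apply: ge_sup; first by exists (PS (l1val x) 0), 0.
by move=> _ [K _ <-].
Qed.

Lemma l1_coord (x : E) k : `|l1val x k| <= N x.
Proof.
apply: le_trans (PS_le x k.+1); rewrite /PS big_ord_recr /= lerDr.
by apply: sumr_ge0.
Qed.

Lemma l1_N0 (x : E) : 0 <= N x.
Proof. apply: le_trans (PS_le x 0); by rewrite /PS big_ord0. Qed.

Lemma PS_scale a (x : E) K : PS (l1val (a *: x)) K = `|a| * PS (l1val x) K.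
Proof. by rewrite /PS mulr_sumr; apply: eq_bigr => k _; rewrite -normrM. Qed.

Lemma l1_norm : is_norm N.
Proof.
split.
- exact: l1_N0.
- move=> x H; apply: val_inj; apply: funext => k /=.
  apply/normr0_eq0; apply: le_anti; rewrite normr_ge0 andbT -H.
  exact: l1_coord.
- move=> a x; apply: le_anti; apply/andP; split.
    apply: N_le => K; rewrite PS_scale; apply: ler_wpM2l => //; exact: PS_le.
  have [a0|an0] := eqVneq a 0.
    by rewrite a0 normr0 mul0r; exact: l1_N0.
  have ap : 0 < `|a| by rewrite normr_gt0.
  rewrite mulrC -ler_pdivlMr //; apply: N_le => K.
  rewrite ler_pdivlMr // mulrC -PS_scale; exact: PS_le.
- move=> x y; apply: N_le => K; apply: le_trans (lerD (PS_le x K) (PS_le y K)).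
  rewrite /PS -big_split /=; apply: ler_sum => k _; exact: ler_normD.
Qed.

Lemma l1_cone : is_closed_convex_cone N P.
Proof.
split.
- by move=> k.
- by move=> x y Px Py k; apply: addr_ge0; [exact: Px | exact: Py].
- by move=> a x a0 Px k; apply: mulr_ge0 => //; exact: Px.
- move=> x H k; rewrite leNgt; apply/negP => xi.
  have xi0 : 0 < - l1val x k by rewrite oppr_gt0.
  have [p Pp hp] := H (- l1val x k) xi0.
  have := le_lt_trans (l1_coord (x - p) k) hp.
  have := Pp k; have := ler_norm (- (l1val x k - l1val p k)); rewrite normrN.
  have -> : l1val (x - p) k = l1val x k - l1val p k by [].
  lra.
Qed.

Lemma l1_dec (x : E) : exists y z : E, [/\ P y, P z, x = y - z & N y + N z <= N x].
Proof.
have [M HM] := l1_bd x.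
have hy : (fun k => ppart (l1val x k)) \in @l1pred R.
  apply: (l1_mem (B := M)) => K; apply: le_trans (HM K); apply: ler_sum => k _.
  case: (maxpart (l1val x k)) => _ _ q0 <-; rewrite lerDl; exact: normr_ge0.
have hz : (fun k => npart (l1val x k)) \in @l1pred R.
  apply: (l1_mem (B := M)) => K; apply: le_trans (HM K); apply: ler_sum => k _.
  case: (maxpart (l1val x k)) => _ _ q0 <-; rewrite lerDr; exact: normr_ge0.
exists (L1 hy), (L1 hz); split.
- by move=> k /=; case: (maxpart (l1val x k)).
- by move=> k /=; case: (maxpart (l1val x k)).
- apply: val_inj; apply: funext => k /=.
  by case: (maxpart (l1val x k)).
have PSe : forall K, PS (fun k => ppart (l1val x k)) K + PS (fun k => npart (l1val x k)) K
    = PS (l1val x) K.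
  move=> K; rewrite /PS -big_split /=; apply: eq_bigr => k _.
  by case: (maxpart (l1val x k)).
suff : N (L1 hz) <= N x - N (L1 hy) by lra.
apply: N_le => K'.
suff : N (L1 hy) <= N x - PS (l1val (L1 hz)) K' by lra.
apply: N_le => K.
have h1 := PS_mono (fun k => ppart (l1val x k)) (leq_maxl K K').
have h2 := PS_mono (fun k => npart (l1val x k)) (leq_maxr K K').
have h3 := PSe (maxn K K').
have h4 := PS_le x (maxn K K').
change (PS (fun k => ppart (l1val x k)) K <= N x - PS (fun k => npart (l1val x k)) K').
lra.
Qed.

Definition l1_f (j : nat) (v : E) : R := l1val v j.
Lemma l1_lin j : lin (l1_f j). Proof. by []. Qed.

Definition ind (j : nat) : nat -> R^o := fun k => if k == j then 1 else 0.
Lemma PS_ind j K : PS (ind j) K <= 1.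
Proof.
elim: K => [|K IH]; first by rewrite /PS big_ord0.
rewrite /PS big_ord_recr /= -/(PS _ K).
have [Kj|Kj] := eqVneq K j.
  suff -> : PS (ind j) K = 0 by rewrite /ind Kj eqxx normr1 add0r.
  rewrite /PS big1 // => k _; rewrite /ind.
  have : (k < j)%N by rewrite -Kj ltn_ord.
  by rewrite ltn_neqAle => /andP [/negbTE -> _]; rewrite normr0.
by rewrite /ind (negbTE Kj) normr0 addr0.
Qed.

Lemma ind_mem j : ind j \in @l1pred R.
Proof. exact: (l1_mem (B := 1)) (PS_ind j). Qed.

Definition l1_e (j : nat) : E := L1 (ind_mem j).

Lemma l1_eN j : N (l1_e j) <= 1.
Proof. by apply: N_le => K; exact: PS_ind. Qed.

Lemma l1_fn v : `|l1_f 0 v| + `|l1_f 1 v| <= N v.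
Proof.
apply: le_trans (PS_le v 2); rewrite /PS !big_ord_recr big_ord0 /= add0r.
by [].
Qed.

Lemma l1_ons : is_ons E.
Proof. exact: mk_ons l1_norm l1_cone l1_dec. Qed.

Lemma l1_c (n : nat) : (0 < n)%N -> c_piss n E = gamma R n.
Proof.
move=> n0.
apply: (@c_good R n n0 E l1_ons (mk_pn l1_norm l1_cone l1_dec) (l1_f 0) (l1_f 1)
  (l1_e 0) (l1_e 1) (l1_lin 0) (l1_lin 1)).
- by move=> v Pv; split; exact: Pv.
- exact: l1_fn.
- exact: l1_eN.
- exact: l1_eN.
- by [].
- by [].
- by [].
- by [].
Qed.

End L1.

Theorem theorem5p3 (R : realType) (n : nat) : (0 < n)%N ->
  (forall m : nat, (2 <= m)%N -> c_piss n (l1m R m) = gamma R n) /\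
  c_piss n (l1 R) = gamma R n /\
  [/\ sup_ratio R n = sup_cplus1 R n,
      sup_cplus1 R n = c_piss n (l1 R),
      c_piss n (l1 R) = c_piss n (l1m R 2)
    & c_piss n (l1m R 2) = gamma R n].
Proof.
move=> n0.
have m22 : (2 <= 2)%N by [].
have c2 : c_piss n (l1m R 2) = gamma R n := l1m_c R m22 n0.
have cl : c_piss n (l1 R) = gamma R n := l1_c R n0.
have supr : (sup_ratio R n <= gamma R n)%E.
  apply: ge_ereal_sup => _ [E [HE ->]].
  apply: le_ereal_inf_tmp => _ [C HC <-].
  apply: ratio_cplus => //.
  by apply: le_trans (l1m_gok m22 HC); exact: ler01.
have s1r : (sup_cplus1 R n <= sup_ratio R n)%E.
  apply: ge_ereal_sup => _ [E [HE H1 ->]].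
  apply: ereal_sup_ubound; exists E; split => //.
  by rewrite H1 expr1n invr1 mule1.
have gs1 : (gamma R n <= sup_cplus1 R n)%E.
  rewrite -c2; apply: ereal_sup_ubound; exists (l1m R 2); split => //.
    exact: l1m_ons.
  exact (l1m_cplus R m22).
have e1 : sup_ratio R n = gamma R n.
  by apply: le_anti; rewrite supr /=; exact: (le_trans gs1 s1r).
have e2 : sup_cplus1 R n = gamma R n.
  by apply: le_anti; rewrite gs1 andbT; exact: (le_trans s1r supr).
split; first by move=> m m2; exact (l1m_c R m2 n0).
split; first exact: cl.
split.
- by rewrite e1 e2.
- by rewrite e2 cl.
- by rewrite cl c2.
- exact: c2.
Qed.
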